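(* Let $n\ge2$, $a_1,\dots,a_n>0$, and let $\mathbf{A}$ be the $n\times n$ matrix whose first column has all entries equal to $-a_n$, whose superdiagonal entries are $A_{i,i+1}=a_i$ for $i\in\{1,\dots,n-1\}$, and all of whose other entries are $0$: $$\mathbf{A}=\begin{pmatrix}-a_n&a_1&0&\cdots&0\\-a_n&0&a_2&\ddots&\vdots\\\vdots&\vdots&\ddots&\ddots&0\\-a_n&0&\cdots&0&a_{n-1}\\-a_n&0&\cdots&0&0\end{pmatrix}.$$ Then the spectral radius satisfies $\rho(\mathbf{A})\le\max\{a_1,\dots,a_n\}$.
   Context: The spectral radius $\rho(\mathbf{A})$ is the maximum modulus of the complex eigenvalues of $\mathbf{A}$. *)

(* Defs.v *)
From HB Require Import structures.
From mathcomp Require Import all_boot all_order all_algebra.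
Set Implicit Arguments. Unset Strict Implicit. Unset Printing Implicit Defensive.
Import Order.TTheory GRing.Theory Num.Theory.
Local Open Scope ring_scope.

(* The matrix A of the paper, with a : nat -> C, where a i (0 <= i < n)
   is the paper's a_{i+1}.  Indices are 0-based:
   column 0 has entries -a_n = -(a (n-1)); entry (i, i+1) is a_{i+1} = a i. *)
Definition matA (C : pzRingType) (n : nat) (a : nat -> C) : 'M[C]_n :=
  \matrix_(i < n, j < n)
    if (j : nat) == 0%N then - a n.-1
    else if (j : nat) == i.+1 then a i else 0.

Definition spectral_radius_le (C : numClosedFieldType) (n : nat)
  (M : 'M[C]_n) (r : C) : Prop :=
  forall lambda : C, eigenvalue M lambda -> `|lambda| <= r.

(* Main.v *)
Require Import Defs.
From HB Require Import structures.
From mathcomp Require Import all_boot all_order all_algebra.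
Import Order.TTheory GRing.Theory Num.Theory.
Set Implicit Arguments. Unset Strict Implicit.
Local Open Scope ring_scope.

Lemma max_ge0 (C : numDomainType) (x y : C) : 0 <= x -> 0 <= y ->
  [/\ 0 <= Num.max x y, x <= Num.max x y & y <= Num.max x y].
Proof.
move=> hx hy; have rx : x \is Num.real by apply: ger0_real.
have ry : y \is Num.real by apply: ger0_real.
case: (real_leP rx ry) => h; split => //; exact: ltW.
Qed.

Lemma bigmax_seq (C : numDomainType) (I : eqType) (r : seq I) (F : I -> C)
  (hF : forall i, 0 <= F i) :
  0 <= \big[Num.max/0]_(j <- r) F j /\ forall i, i \in r -> F i <= \big[Num.max/0]_(j <- r) F j.
Proof.
elim: r => [|x r [h0 IH]]; first by rewrite big_nil; split => // i.
rewrite big_cons; case: (max_ge0 (hF x) h0) => m0 m1 m2; split => // i.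
rewrite in_cons => /orP [/eqP -> //|/IH]; move=> hi; exact: le_trans hi m2.
Qed.

Lemma bigmax_ge (C : numDomainType) (n : nat) (F : 'I_n -> C)
  (hF : forall i, 0 <= F i) (i : 'I_n) : F i <= \big[Num.max/0]_(j < n) F j.
Proof.
have [_ h] := bigmax_seq (index_enum 'I_n) hF; apply: h.
by rewrite mem_index_enum.
Qed.

Lemma zid1 (V : zmodType) (x y p q : V) : -(x+y) = (-x - (p+q)) + (p - y) + q.
Proof. rewrite !opprD !addrA (addrAC (-x - p)) subrK (addrAC (-x - q)) subrK //. Qed.
Lemma zid2 (V : zmodType) (s x y p q : V): s - x + (p - y) + q = s + (p + q) - (x + y).
Proof. by rewrite -addrA (addrAC p) addrA (addrAC s) -addrA -opprD. Qed.

Theorem mainTheorem11 (C : numClosedFieldType) (n : nat) (a : nat -> C)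
  (hn : (2 <= n)%N) (ha : forall i : nat, (i < n)%N -> 0 < a i) :
  spectral_radius_le (matA n a) (\big[Num.max/0]_(i < n) a i).
Proof.
move=> lam /eigenvalueP [v hv vn0].
case: n hn ha v hv vn0 => [//|m] _ ha v hv vn0.
set M := \big[Num.max/0]_(i < m.+1) a i.
have haM : forall i : 'I_m.+1, a i <= M.
  by move=> i; apply: (bigmax_ge (F := fun i : 'I_m.+1 => a i)) => j; apply: ltW; apply: ha.
have ha0 : forall i : 'I_m.+1, 0 <= a i by move=> i; apply: ltW; apply: ha.
pose f : 'I_m.+1 -> C := fun i => v 0 i.
set S := \sum_i f i.
have E0 : lam * f ord0 = - (a m * S).
  have := congr1 (fun A : 'M[C]_(1, m.+1) => A 0 ord0) hv; rewrite !mxE => <-.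
  rewrite /S mulr_sumr -sumrN; apply: eq_bigr => k _.
  by rewrite /matA !mxE /= mulrN mulrC.
have Ej : forall j : 'I_m, lam * f (lift ord0 j) = a j * f (widen_ord (leqnSn m) j).
  move=> j; have := congr1 (fun A : 'M[C]_(1, m.+1) => A 0 (lift ord0 j)) hv; rewrite !mxE => <-.
  rewrite (bigD1 (widen_ord (leqnSn m) j)) //= big1 ?addr0.
    by rewrite /matA !mxE lift0 /= eqxx mulrC.
  move=> i hi; rewrite /matA !mxE lift0 /=.
  case: ifP => [/eqP|_]; last by rewrite mulr0.
  move=> [] hij; exfalso; move/eqP: hi; apply; apply: val_inj => /=; by rewrite hij.
have M0 : 0 <= M by apply: le_trans (ha0 ord0) (haM ord0).
pose W := \sum_(j < m) f (widen_ord (leqnSn m) j).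
pose Lf := \sum_(j < m) f (lift ord0 j).
have hS1 : S = f ord0 + Lf by rewrite /S big_ord_recl.
have hS2 : S = W + f ord_max by rewrite /S big_ord_recr.
have E0' : a m * S = - (lam * f ord0) by rewrite E0 opprK.
have hsum : \sum_(j < m) (M - a j) * f (widen_ord (leqnSn m) j) = M * W - lam * Lf.
  rewrite /W /Lf mulr_sumr mulr_sumr -sumrB; apply: eq_bigr => j _.
  by rewrite mulrBl Ej.
have Id : - (lam * S) = (M - a m) * (- S)
    + \sum_(j < m) (M - a j) * f (widen_ord (leqnSn m) j) + M * f ord_max.
  rewrite hsum mulrN mulrBl opprB E0'.
  rewrite [in M * S]hS2 [in LHS]hS1 !mulrDr.
  exact: zid1.
pose T := \sum_i `|f i|.
pose TW := \sum_(j < m) `|f (widen_ord (leqnSn m) j)|.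
pose TL := \sum_(j < m) `|f (lift ord0 j)|.
have hT1 : T = `|f ord0| + TL by rewrite /T big_ord_recl.
have hT2 : T = TW + `|f ord_max| by rewrite /T big_ord_recr.
have hsumN : \sum_(j < m) `|(M - a j) * f (widen_ord (leqnSn m) j)| = M * TW - `|lam| * TL.
  rewrite /TW /TL mulr_sumr mulr_sumr -sumrB; apply: eq_bigr => j _.
  have hj := haM (widen_ord (leqnSn m) j).
  rewrite normrM ger0_norm ?subr_ge0 //.
  have aj : `|a j| = a j := ger0_norm (ha0 (widen_ord (leqnSn m) j)).
  rewrite mulrBl -aj -normrM.
  by rewrite -Ej normrM.
have Bnd : `|lam| * `|S| <= M * `|S| + M * T - `|lam| * T.
  rewrite -normrM -normrN Id.
  apply: le_trans (ler_normD _ _) _.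
  apply: le_trans (lerD (ler_normD _ _) (lexx _)) _.
  apply: le_trans (lerD (lerD (lexx _) (ler_norm_sum _ _ _)) (lexx _)) _.
  have am : 0 <= M - a m by rewrite subr_ge0; exact: (haM ord_max).
  rewrite hsumN !normrM normrN (ger0_norm am) (ger0_norm M0).
  have amn : `|a m| = a m := ger0_norm (ha0 ord_max).
  have h : a m * `|S| = `|lam| * `|f ord0| by rewrite -amn -!normrM E0' normrN.
  by rewrite mulrBl h zid2 -!mulrDr -hT1 -hT2.
have Tpos : 0 < T.
  rewrite lt_def sumr_ge0 ?andbT //; apply/negP => /eqP hT.
  have h0 := psumr_eq0P (fun i _ => normr_ge0 (f i)) hT.
  move/negP: vn0; apply; apply/eqP/matrixP => i j.
  rewrite ord1 mxE; apply/eqP; rewrite -normr_eq0; apply/eqP; exact: h0.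
have STpos : 0 < `|S| + T by apply: ltr_wpDl.
by rewrite lerBrDr -!mulrDr ler_pM2r in Bnd.

Qed.
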